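(* Consider the protocol \textsf{Sieve} (described in the context) run on top of an instance $pb$ of probabilistic broadcast. If $pb$ satisfies $\epsilon_t^{pb}$-totality, then \textsf{Sieve} satisfies $\epsilon_v$-total validity with $$\epsilon_v \le \epsilon_t^{pb} + \left(1-\epsilon_t^{pb}\right)\left(1-(1-\epsilon_o)^C\right),\qquad \epsilon_o=\sum_{\bar F=E-\hat E+1}^{E}\binom{E}{\bar F} f^{\bar F}(1-f)^{E-\bar F}.$$
   Context: System model: a fixed set $\Pi$ of $N$ processes, of which a fraction $f$ are Byzantine (arbitrary behaviour, controlled by a single colluding static adversary that also controls message scheduling) and $C=(1-f)N$ are correct; $\Pi_C$ denotes the set of correct processes. The system is asynchronous: any two processes are connected by reliable authenticated point-to-point links (every message between correct processes is eventually delivered, after an arbitrary finite delay). Signatures cannot be forged. Each correct process has a private, unbiased, independent source of randomness unknown to the adversary, and an oracle returning processes of $\Pi$ chosen uniformly at random. A designated sender $\sigma$ broadcasts a single message. Probabilistic broadcast ($pb$): sender $\sigma$ may broadcast a message; processes deliver at most one message (no duplication); if $\sigma$ is correct, any message delivered by a correct process was broadcast by $\sigma$ (integrity); a correct sender delivers the message it broadcasts (validity); $pb$ satisfies $\epsilon$-totality if, with probability at least $1-\epsilon$, whenever some correct process delivers a message, every correct process eventually delivers a message. \textsf{Sieve} (parameters: echo sample size $E$ and delivery threshold $\hat E$): upon initialization each correct process draws an echo sample $\mathcal{E}$ consisting of $E$ processes, each drawn independently and uniformly from $\Pi$ (with replacement), and sends an EchoSubscribe message to each of them; it records every process from which it receives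 EchoSubscribe in a subscription set. To broadcast $m$, $\sigma$ broadcasts $(m,\mathrm{sign}_\sigma(m))$ via $pb$. Upon $pb$-delivering a pair $(m,s)$ with $s$ a valid signature of $\sigma$ on $m$, a correct process sets $echo=(m,s)$ and sends an Echo$(m,s)$ message to every process in its subscription set (and, for any EchoSubscribe received later, replies with Echo$(m,s)$). A correct process records, for each process $\pi$ in its echo sample, the first Echo message with a valid signature received from $\pi$. A correct process that has not yet delivered delivers $m$ as soon as at least $\hat E$ members of its echo sample have sent it an Echo for the same pair as its own $echo$. $\epsilon$-total validity: if $\sigma$ is correct and broadcasts $m$, then with probability at least $1-\epsilon$ every correct process eventually delivers $m$. Probabilities are over the random choices of correct processes, for any adversary behaviour. *)

(* Defs.v *)
From HB Require Import structures.
From mathcomp Require Import all_boot all_order all_algebra.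
From mathcomp Require Import all_classical all_reals all_analysis.
Set Implicit Arguments. Unset Strict Implicit. Unset Printing Implicit Defensive.
Import Order.TTheory GRing.Theory Num.Theory.
Local Open Scope classical_set_scope.
Local Open Scope ring_scope.

(* Processes are 'I_N; Byz is the set of Byzantine processes.
   The echo samples of all processes: process p's sample is a vector of E
   independent uniform draws (with replacement) from 'I_N. *)
Definition sample_t (N E : nat) := {ffun 'I_N -> {ffun 'I_E -> 'I_N}}.

(* Eventual Sieve delivery of message m by correct process p, given:
   - pbd q : the message (signed pair) pb-delivered by q (None if never);
     every correct q that pb-delivers sets echo and sends Echo to all its
     subscribers (including later ones), so p receives it if q is in p's sample;
   - becho b p : whether Byzantine b eventually sends p an Echo for p's pair;
   - smp : p's echo sample.
   Members of the sample are counted by draw (position i : 'I_E). *)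
Definition sieve_delivers (N E Ehat : nat) (Msg : eqType) (Byz : {set 'I_N})
  (pbd : 'I_N -> option Msg) (becho : 'I_N -> 'I_N -> bool)
  (smp : {ffun 'I_E -> 'I_N}) (p : 'I_N) (m : Msg) : Prop :=
  pbd p = Some m /\
  (Ehat <= #|[set i : 'I_E | if smp i \in Byz then becho (smp i) p
                              else pbd (smp i) == Some m]|)%N.

(* pb with correct sender sigma broadcasting m: for every pb-adversary A and
   every outcome r of the correct processes' randomness, pbout A r p is the
   (unique, possibly absent) message eventually pb-delivered by p.
   Validity and integrity. *)
Definition pb_correct_sender (Omega Adv : Type) (N : nat) (Msg : Type)
  (Byz : {set 'I_N}) (pbout : Adv -> Omega -> 'I_N -> option Msg)
  (sigma : 'I_N) (m : Msg) : Prop :=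
  (forall A r, pbout A r sigma = Some m) /\
  (forall A r p x, p \notin Byz -> pbout A r p = Some x -> x = m).

Definition pb_totality (R : realType) (d : measure_display)
  (Omega : measurableType d) (P : probability Omega R) (Adv : Type) (N : nat)
  (Msg : Type) (Byz : {set 'I_N}) (pbout : Adv -> Omega -> 'I_N -> option Msg)
  (eps : R) : Prop :=
  forall A : Adv,
    ((1 - eps)%:E <=
     P [set r | (exists p, p \notin Byz /\ pbout A r p <> None) ->
                forall p, p \notin Byz -> pbout A r p <> None])%E.

Definition all_correct_deliver (Omega Adv : Type) (N E Ehat : nat)
  (Msg : eqType) (Byz : {set 'I_N}) (pbout : Adv -> Omega -> 'I_N -> option Msg)
  (A : Adv) (becho : Omega -> 'I_N -> 'I_N -> bool) (s : sample_t N E)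
  (m : Msg) : set Omega :=
  [set r | forall p, p \notin Byz ->
     sieve_delivers Ehat Byz (pbout A r) (becho r) (s p) p m].

(* Probability (over pb randomness and independent uniform samples) that
   every correct process delivers m, when the adversary picks its pb strategy
   strat s and the Byzantine echo behaviour becho s as functions of the samples. *)
Definition sieve_validity_prob (R : realType) (d : measure_display)
  (Omega : measurableType d) (P : probability Omega R) (Adv : Type)
  (N E Ehat : nat) (Msg : eqType) (Byz : {set 'I_N})
  (pbout : Adv -> Omega -> 'I_N -> option Msg)
  (strat : sample_t N E -> Adv)
  (becho : sample_t N E -> Omega -> 'I_N -> 'I_N -> bool) (m : Msg) : \bar R :=
  (\sum_(s : sample_t N E)
     ((#|{: sample_t N E}|%:R)^-1)%:E *
     P (all_correct_deliver Ehat Byz pbout (strat s) (becho s) s m))%E.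

Definition eps_o (R : realType) (N E Ehat : nat) (Byz : {set 'I_N}) : R :=
  let f : R := #|Byz|%:R / N%:R in
  \sum_((E.+1 - Ehat)%N <= F < E.+1) 'C(E, F)%:R * f ^+ F * (1 - f) ^+ (E - F).

Definition eps_v_bound (R : realType) (N E Ehat : nat) (Byz : {set 'I_N})
  (eps_t : R) : R :=
  let C := (N - #|Byz|)%N in
  eps_t + (1 - eps_t) * (1 - (1 - eps_o R E Ehat Byz) ^+ C).

(* Main.v *)
Require Import Defs.
From HB Require Import structures.
From mathcomp Require Import all_boot all_order all_algebra.
From mathcomp Require Import all_classical all_reals all_analysis.
From mathcomp Require Import zify ring lra.
Import Order.TTheory GRing.Theory Num.Theory.
Local Open Scope classical_set_scope.
Local Open Scope ring_scope.
Local Open Scope nat_scope.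
Local Close Scope classical_set_scope.
Lemma card_ffun_family (A T : finType) (F : A -> {set T}) :
  #|[set f : {ffun A -> T} | [forall i, f i \in F i]]| = \prod_i #|F i|.
Proof.
rewrite cardsE.
have -> : #|[pred f : {ffun A -> T} | [forall i, f i \in F i]]| = #|family F|.
  apply: eq_card => f; rewrite [in LHS]inE; apply/forallP/familyP => //.
rewrite card_family foldrE big_map big_enum /=. done.
Qed.

Lemma card_by_set (E N : nat) (B : {set 'I_N}) (S : {set 'I_E}) :
  #|[set v : {ffun 'I_E -> 'I_N} | [set i | v i \in B] == S]| =
  #|B| ^ #|S| * (N - #|B|) ^ (E - #|S|).
Proof.
have -> : [set v : {ffun 'I_E -> 'I_N} | [set i | v i \in B] == S] =
   [set v : {ffun 'I_E -> 'I_N} | [forall i, v i \in (if i \in S then B else ~: B)]].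
  apply/setP => v; rewrite !inE; apply/eqP/forallP => [<- i|H].
    by rewrite inE; case: ifP => //; rewrite inE => ->.
  apply/setP => i; rewrite inE; have := H i; case: ifP => _ //; rewrite inE.
  by move/negbTE.
rewrite card_ffun_family (bigID (mem S)) /=.
rewrite (eq_bigr (fun _ => #|B|)); last by move=> i ->.
rewrite [X in _ * X](eq_bigr (fun _ => #|~: B|)); last by move=> i /negbTE ->.
rewrite !prod_nat_const; congr (_ * _ ^ _).
  by rewrite cardsCs finset.setCK card_ord.
have := cardC (mem S); rewrite card_ord => HE.
have H2 : #|(fun i : 'I_E => i \notin S)| = #|predC (mem S)| by apply: eq_card.
rewrite H2 -[X in _ = X - _]HE addKn //.
Qed.


Lemma card_bad (E N K : nat) (B : {set 'I_N}) :
  #|[set v : {ffun 'I_E -> 'I_N} | K <= #|[set i | v i \in B]|]| =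
  \sum_(K <= F < E.+1) 'C(E, F) * (#|B| ^ F * (N - #|B|) ^ (E - F)).
Proof.
set w := fun F => #|B| ^ F * (N - #|B|) ^ (E - F).
rewrite -sum1dep_card.
rewrite (partition_big (fun v : {ffun 'I_E -> 'I_N} => [set i | v i \in B])
            (fun S : {set 'I_E} => K <= #|S|)) /=; last by [].
rewrite (eq_bigr (fun S : {set 'I_E} => w #|S|)); last first.
  move=> S HS.
  rewrite (eq_bigl (fun v : {ffun 'I_E -> 'I_N} => [set i | v i \in B] == S)); last first.
    by move=> v /=; case: eqP => [->|]; rewrite ?andbF ?HS.
  by rewrite sum1dep_card card_by_set.
rewrite (partition_big (fun S : {set 'I_E} => (inord #|S| : 'I_E.+1))
            (fun j : 'I_E.+1 => K <= j)) /=; last first.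
  move=> S HS; rewrite inordK //; have := max_card (mem S); rewrite card_ord.
  by [].
rewrite big_geq_mkord; apply: eq_bigr => j Hj.
have HSE : forall S : {set 'I_E}, #|S| < E.+1.
  by move=> S; have := max_card (mem S); rewrite card_ord.
rewrite (eq_bigl (fun S : {set 'I_E} => #|S| == j)); last first.
  move=> S; rewrite -(inj_eq val_inj) /= inordK //.
  by case: eqP => [->|]; rewrite ?andbF ?andbT.
rewrite (eq_bigr (fun _ => w j)); last by move=> S /eqP ->.
rewrite sum_nat_cond_const; have := card_draws ('I_E) j; rewrite card_ord => ->.
by [].
Qed.
Local Open Scope classical_set_scope.
Local Open Scope ring_scope.

Theorem theorem8 (R : realType) (d : measure_display) (Omega : measurableType d)
  (P : probability Omega R) (Adv : Type) (N E Ehat : nat) (Msg : eqType)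
  (Byz : {set 'I_N}) (sigma : 'I_N) (m : Msg)
  (pbout : Adv -> Omega -> 'I_N -> option Msg) (eps_t : R) :
  sigma \notin Byz ->
  pb_correct_sender Byz pbout sigma m ->
  (forall A p x, measurable [set r | pbout A r p = x]) ->
  pb_totality P Byz pbout eps_t ->
  forall (strat : sample_t N E -> Adv)
         (becho : sample_t N E -> Omega -> 'I_N -> 'I_N -> bool),
  (forall s b p, measurable [set r | becho s r b p]) ->
  ((1 - eps_v_bound E Ehat Byz eps_t)%:E <=
     sieve_validity_prob P Ehat Byz pbout strat becho m)%E.
Proof.
move=> Hsig [Hval Hint] _ Htot strat becho _.
set b := #|Byz|.
have HN : (0 < N)%N by apply: (leq_ltn_trans _ (ltn_ord sigma)).
have HcB : #|~: Byz| = (N - b)%N.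
  by have := cardsC Byz; rewrite card_ord -/b; lia.
have Hb : (b <= N)%N by have := cardsC Byz; rewrite card_ord -/b; lia.
set Q := (N ^ E)%N.
have HQ : (0 < Q)%N by rewrite expn_gt0 HN.
have HQ0 : (Q%:R : R) != 0 by rewrite pnatr_eq0 -lt0n.
set Gs := [set v : {ffun 'I_E -> 'I_N} | (Ehat <= #|[set i | v i \notin Byz]%SET|)%N]%SET.
have Hc : (#|Gs| + #|~: Gs|)%N = Q by rewrite cardsC card_ffun !card_ord.
have Hbad : ~: Gs = [set v : {ffun 'I_E -> 'I_N} |
                       (E.+1 - Ehat <= #|[set i | v i \in Byz]%SET|)%N]%SET.
  apply/setP => v; rewrite !inE.
  have := cardsC [set i | v i \in Byz]%SET; rewrite card_ord.
  have -> : ~: [set i | v i \in Byz]%SET = [set i | v i \notin Byz]%SET.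
    by apply/setP=> i; rewrite !inE.
  move: (#|[set i | v i \in Byz]%SET|) (#|[set i | v i \notin Byz]%SET|) => x y H; rewrite -ltnNge; apply/idP/idP => H1; lia.
have Heps : eps_o R E Ehat Byz = #|~: Gs|%:R / Q%:R.
  rewrite Hbad card_bad /eps_o natr_sum mulr_suml; apply: eq_big_nat => F /andP[_ HF].
  have HNR : (N%:R : R) != 0 by rewrite pnatr_eq0 -lt0n.
  have -> : (1 - #|Byz|%:R / N%:R : R) = (N - b)%N%:R / N%:R.
    by rewrite natrB // -/b; field.
  rewrite !expr_div_n !natrM !natrX. rewrite -/b.
  have -> : (N%:R ^+ E : R) = N%:R ^+ F * N%:R ^+ (E - F).
    by rewrite -exprD subnKC // -ltnS.
  field; rewrite ?expf_neq0 //.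
have Hq : (#|Gs|%:R / Q%:R : R) = 1 - eps_o R E Ehat Byz.
  rewrite Heps; have -> : (#|Gs|%:R : R) = Q%:R - #|~: Gs|%:R.
    by rewrite -Hc natrD; ring.
  by field.
set GA := [set s : sample_t N E | [forall p, (p \notin Byz) ==> (s p \in Gs)]]%SET.
have HGA : #|GA| = (#|Gs| ^ (N - b) * Q ^ b)%N.
  have -> : GA = [set s : {ffun 'I_N -> {ffun 'I_E -> 'I_N}} |
                    [forall p, s p \in (if p \in Byz then [set: {ffun 'I_E -> 'I_N}] else Gs)]]%SET.
    apply/setP => s; rewrite !inE; apply: eq_forallb => p.
    by case: (p \in Byz); rewrite ?inE.
  rewrite card_ffun_family (bigID (mem Byz)) /= mulnC.
  rewrite [X in (_ * X)%N](eq_bigr (fun _ => Q)); last by move=> i ->; rewrite cardsT card_ffun !card_ord.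
  rewrite [X in (X * _)%N](eq_bigr (fun _ => #|Gs|)); last by move=> i /negbTE ->.
  rewrite !prod_nat_const -/b; congr (_ ^ _ * _)%N.
  by rewrite -HcB; apply: eq_card => i; rewrite !inE.
have Hcard : #|{: sample_t N E}| = (Q ^ N)%N by rewrite card_ffun card_ffun !card_ord.
clearbody Q.
have Hratio : (#|GA|%:R / (#|{: sample_t N E}|%:R) : R) = (1 - eps_o R E Ehat Byz) ^+ (N - b).
  rewrite -Hq Hcard HGA !natrM !natrX.
  have -> : (Q%:R : R) ^+ N = Q%:R ^+ (N - b) * Q%:R ^+ b by rewrite -exprD subnK.
  rewrite expr_div_n; field; rewrite ?expf_neq0 //.
have Hgood : forall s, s \in GA ->
    ((1 - eps_t)%:E <= P (all_correct_deliver Ehat Byz pbout (strat s) (becho s) s m))%E.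
  move=> s; rewrite inE => /forallP Hs.
  suff -> : all_correct_deliver Ehat Byz pbout (strat s) (becho s) s m =
     [set r | (exists p, p \notin Byz /\ pbout (strat s) r p <> None) ->
                forall p, p \notin Byz -> pbout (strat s) r p <> None].
    exact: Htot.
  apply/seteqP; split => r /=.
    by move=> H _ p Hp; case: (H p Hp) => ->.
  move=> H.
  have Hall : forall q, q \notin Byz -> pbout (strat s) r q = Some m.
    move=> q Hq'.
    have := H (ex_intro _ sigma (conj Hsig _)) q Hq'.
    rewrite Hval => /(_ ltac:(done)).
    case Eq: (pbout _ r q) => [x|] // _.
    by rewrite (Hint _ _ _ _ Hq' Eq).
  move=> p Hp; split; first exact: Hall p Hp.
  have := Hs p; rewrite Hp /= inE => Hg.
  apply: leq_trans Hg _; apply: subset_leq_card; apply/fintype.subsetP => i.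
  by rewrite inE => Hi; rewrite in_setE /= (negbTE Hi) Hall.
have -> : 1 - eps_v_bound E Ehat Byz eps_t =
          (1 - eps_t) * (1 - eps_o R E Ehat Byz) ^+ (N - b).
  rewrite /eps_v_bound -/b; ring.
have Hq0 : 0 <= 1 - eps_o R E Ehat Byz by rewrite -Hq divr_ge0.
rewrite /sieve_validity_prob.
have Hw : (0 : R) <= (#|{: sample_t N E}|%:R)^-1 by rewrite invr_ge0.
case: (lerP 0 (1 - eps_t)) => Ha; last first.
  apply: le_trans (_ : 0%:E <= _)%E.
    by rewrite lee_fin nmulr_rle0 // exprn_ge0.
  by apply: sume_ge0 => s _; apply: mule_ge0; rewrite ?lee_fin.
apply: le_trans (_ : (\sum_(s : sample_t N E)
   ((#|{: sample_t N E}|%:R)^-1 * (if s \in GA then 1 - eps_t else 0))%:E <= _)%E); last first.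
  apply: lee_sum => s _; rewrite EFinM; apply: lee_wpmul2l; first by rewrite lee_fin.
  by case: ifP => [/Hgood //|_]; apply: measure_ge0.
rewrite sumEFin lee_fin -mulr_sumr -big_mkcond /= sumr_const -Hratio.
rewrite le_eqVlt; apply/orP; left; apply/eqP.
by rewrite [RHS]mulrC -[(1 - eps_t) *+ _]mulr_natr -mulrA.
Qed.
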